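(* Fix $p\in T^*\mathcal{Y}\setminus 0$. Let $\Sigma_p$ be the set of covectors $q\in T^*\mathcal{X}\setminus 0$ such that $(p,q)$ lies in the degenerate set $\Sigma$ of $\Lambda'$, and let $M_p=\{q\in T^*\mathcal{X}\setminus0: (p,q)\in\Lambda'\}$ be the set of mirror points associated to $p$. Then $M_p\setminus\Sigma_p$ consists of isolated covectors.
   Context: Setting (synthetic aperture radar model). $\gamma$ is a smooth embedded unit-speed curve in $\mathbb{R}^3$ (parameter $s$), $\Psi\subset\mathbb{R}^3$ a smooth embedded surface locally parametrized by $\psi(u,v)$, with $\mathrm{dist}(\Psi,\gamma)>0$; $c_0>0$ constant; $\mathcal{Y}=(s_1,s_2)\times(t_1,t_2)$, $\mathcal{X}=\{(u,v):\exists s\in(s_1,s_2),\ \tfrac{2}{c_0}|\psi(u,v)-\gamma(s)|\in(t_1,t_2)\}$. $R(u,v,s)=\psi(u,v)-\gamma(s)$, $\hat R=R/|R|$, and $\pi_{T\Psi}\hat R(u,v,s)$ is the projection of $\hat R$ onto the tangent plane of $\Psi$ at $\psi(u,v)$, written in components with respect to the coordinates $(u,v)$. Coordinates $(s,t,\sigma,\tau)$ on $T^*\mathcal{Y}$, $(u,v,\xi,\eta)$ on $T^*\mathcal{X}$. The canonical relation of the SAR forward operator is \[ \Lambda'=\Big\{(s,t,\sigma,\tau;u,v,\xi,\eta): t=\tfrac{2}{c_0}|R(u,v,s)|,\ \sigma=\tfrac{2\tau}{c_0}\hat R(u,v,s)\cdot\dot\gamma(s),\ (\xi,\eta)=\tfrac{2\tau}{c_0}\pi_{T\Psi}\hat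 R(u,v,s)\Big\}. \] Its degenerate set is $\Sigma=\Sigma_1\cup\Sigma_2$ with $\Sigma_1=\{\pi_{T\Psi}\hat R\parallel\nabla_{u,v}(\hat R\cdot\dot\gamma(s))\}\cap\Lambda'$ and $\Sigma_2=\{\pi_{T\Psi}\hat R\parallel\partial_s\pi_{T\Psi}\hat R\}\cap\Lambda'$; away from $\Sigma$, $\Lambda'$ is locally the graph of a diffeomorphism. *)

(* Defs.v *)
From HB Require Import structures.
From mathcomp Require Import all_boot all_order all_algebra.
From mathcomp Require Import all_classical all_reals all_analysis.
Set Implicit Arguments. Unset Strict Implicit. Unset Printing Implicit Defensive.
Import Order.TTheory GRing.Theory Num.Theory.
Import numFieldNormedType.Exports.
Local Open Scope classical_set_scope.
Local Open Scope ring_scope.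

Section SAR.
Variable R : realType.

(** Euclidean inner product and Euclidean norm on row vectors
    (the library norm on 'rV is the max norm, so we define these). *)
Definition dotv (n : nat) (x y : 'rV[R]_n) : R := \sum_(i < n) x 0 i * y 0 i.
Definition enorm (n : nat) (x : 'rV[R]_n) : R := Num.sqrt (dotv x x).

(** Coordinate unit vectors of R^2 : e_u = e 0, e_v = e 1. *)
Definition e2 (j : 'I_2) : 'rV[R]_2 := delta_mx 0 j.

Fixpoint CkOn (V W : normedModType R) (A : set V) (k : nat) (f : V -> W) : Prop :=
  match k with
  | 0 => forall x, A x -> f @ x --> f x
  | k'.+1 => (forall x, A x -> differentiable f x) /\
             (forall v : V, CkOn A k' ('D_v f))
  end.

Definition smooth_on (V W : normedModType R) (A : set V) (f : V -> W) : Prop :=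
  forall k, CkOn A k f.

Definition parallel2 (a b : 'rV[R]_2) : Prop := a 0 0 * b 0 1 - a 0 1 * b 0 0 = 0.

Variables (psi : 'rV[R]_2 -> 'rV[R]_3) (gam : R -> 'rV[R]_3).

Definition Rv (x : 'rV[R]_2) (s : R) : 'rV[R]_3 := psi x - gam s.
Definition Rhat (x : 'rV[R]_2) (s : R) : 'rV[R]_3 := (enorm (Rv x s))^-1 *: Rv x s.

(** pi_{T Psi} \hat R in components w.r.t. the coordinates (u,v)
    (covector components: (\hat R . psi_u, \hat R . psi_v)). *)
Definition piTR (x : 'rV[R]_2) (s : R) : 'rV[R]_2 :=
  \row_(j < 2) dotv (Rhat x s) ('D_(e2 j) psi x).

Definition gradRg (x : 'rV[R]_2) (s : R) : 'rV[R]_2 :=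
  \row_(j < 2) 'D_(e2 j) (fun y => dotv (Rhat y s) (derive1 gam s)) x.

Definition dspiTR (x : 'rV[R]_2) (s : R) : 'rV[R]_2 := derive1 (fun s0 => piTR x s0) s.

Variables (U : set 'rV[R]_2) (c0 s1 s2 t1 t2 : R).

Definition inY (s t : R) : Prop := s1 < s <  s2 /\ t1 < t < t2.
Definition inX (x : 'rV[R]_2) : Prop :=
  U x /\ exists s, s1 < s < s2 /\ t1 < 2 / c0 * enorm (Rv x s) < t2.

(** T^*Y \ 0 and T^*X \ 0, with covectors p = (s,t,sigma,tau), q = (x,k),
    x = (u,v), k = (xi,eta). *)
Definition TY0 (s t sig tau : R) : Prop := inY s t /\ (sig, tau) <> (0, 0).
Definition TX0 (x k : 'rV[R]_2) : Prop := inX x /\ k <> 0.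

Definition Lambda' (s t sig tau : R) (x k : 'rV[R]_2) : Prop :=
  [/\ inY s t, inX x,
      t = 2 / c0 * enorm (Rv x s),
      sig = 2 * tau / c0 * dotv (Rhat x s) (derive1 gam s) &
      k = (2 * tau / c0) *: piTR x s].

Definition Sigma1 (s t sig tau : R) (x k : 'rV[R]_2) : Prop :=
  Lambda' s t sig tau x k /\ parallel2 (piTR x s) (gradRg x s).
Definition Sigma2 (s t sig tau : R) (x k : 'rV[R]_2) : Prop :=
  Lambda' s t sig tau x k /\ parallel2 (piTR x s) (dspiTR x s).
Definition Sigma (s t sig tau : R) (x k : 'rV[R]_2) : Prop :=
  Sigma1 s t sig tau x k \/ Sigma2 s t sig tau x k.

Definition Sigma_p (s t sig tau : R) (x k : 'rV[R]_2) : Prop :=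
  TX0 x k /\ Sigma s t sig tau x k.
Definition Mirror_p (s t sig tau : R) (x k : 'rV[R]_2) : Prop :=
  TX0 x k /\ Lambda' s t sig tau x k.

End SAR.

(* Main.v *)
Require Import Defs.
From HB Require Import structures.
From mathcomp Require Import all_boot all_order all_algebra.
From mathcomp Require Import all_classical all_reals all_analysis.
From mathcomp Require Import ring lra.
Import Order.TTheory GRing.Theory Num.Theory.
Import numFieldNormedType.Exports.
Local Open Scope classical_set_scope.
Local Open Scope ring_scope.

Lemma diff_small (R : realType) (V : normedModType R) (f : V -> R) x :
  differentiable f x -> forall eps : R, 0 < eps ->
  \forall h \near 0, `|f (h + x) - f x - 'd f x h| <= eps * `|h|.
Proof.
move=> /diff_locally /eqaddoP H eps e0.
have := H eps e0. apply: filterS => h /=.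
by rewrite opprD addrA.
Qed.
Arguments diff_small {R V f x}.

Lemma rV2_dec (R : realType) (h : 'rV[R]_2) :
  h = h 0 0 *: e2 R 0 + h 0 1 *: e2 R 1.
Proof.
apply/rowP => j; rewrite !mxE /=.
case: j => [[|[|n]] Hn] /=; rewrite ?mulr1 ?mulr0 ?addr0 ?add0r //;
  by congr (h _ _); apply/val_inj.
Qed.

Lemma norm_rV2_le (R : realType) (h : 'rV[R]_2) (c : R) :
  `|h 0 0| <= c -> `|h 0 1| <= c -> `|h| <= c.
Proof.
move=> h0 h1; rewrite [leLHS]/Num.Def.normr/= mx_normrE.
apply: bigmax_le; first exact: le_trans (normr_ge0 _) h0.
move=> [i j] _ /=.
rewrite (ord1 i); case: j => [[|[|n]] Hn] //=.
  by rewrite (_ : Ordinal _ = 0) //; apply/val_inj.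
by rewrite (_ : Ordinal _ = 1) //; apply/val_inj.
Qed.

Lemma aux1 (R : realType) (p q r t : R) : `|t| + `|q| <= `|p| + `|q| + `|r| + `|t| + 1.
Proof. have := normr_ge0 p; have := normr_ge0 r; lra. Qed.
Lemma aux2 (R : realType) (p q r t : R) : `|p| + `|r| <= `|p| + `|q| + `|r| + `|t| + 1.
Proof. have := normr_ge0 q; have := normr_ge0 t; lra. Qed.

Lemma core2 (R : realType) (a b c d u w nh : R) :
  a * d - b * c != 0 -> 0 <= nh ->
  `|u * a + w * b| <= `|a * d - b * c| / (2 * (`|a| + `|b| + `|c| + `|d| + 1)) * nh ->
  `|u * c + w * d| <= `|a * d - b * c| / (2 * (`|a| + `|b| + `|c| + `|d| + 1)) * nh ->
  `|u| <= nh / 2 /\ `|w| <= nh / 2.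
Proof.
set D := a * d - b * c.
set M := `|a| + `|b| + `|c| + `|d| + 1.
move=> D0 nh0 H1 H2.
have M0 : 0 < M by rewrite /M ltr_pwDr // !addr_ge0.
set eps := `|D| / (2 * M) in H1 H2.
have eps0 : 0 < eps by rewrite divr_gt0 ?normr_gt0 // mulr_gt0.
have key : forall y z p q : R, `|p| <= eps * nh -> `|q| <= eps * nh ->
    `|y| + `|z| <= M -> `|y * p - z * q| <= `|D| / 2 * nh.
  move=> y z p q hp hq hyz.
  apply: le_trans (ler_normB _ _) _.
  rewrite !normrM.
  apply: (@le_trans _ _ ((`|y| + `|z|) * (eps * nh))).
    by rewrite mulrDl lerD // ler_wpM2l.
  apply: (@le_trans _ _ (M * (eps * nh))).
    by rewrite ler_wpM2r // mulr_ge0 // ltW.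
  by rewrite le_eqVlt; apply/orP; left; apply/eqP; rewrite /eps; field; rewrite gt_eqF.
have Dp : 0 < `|D| by rewrite normr_gt0.
split.
  have : `|D| * `|u| <= `|D| / 2 * nh.
    rewrite -normrM (_ : D * u = d * (u * a + w * b) - b * (u * c + w * d)).
      apply: key => //. rewrite /M; apply: aux1.
    by rewrite /D; ring.
  by move=> H; rewrite -(ler_pM2l Dp); apply: le_trans H _; rewrite mulrAC -mulrA.
have : `|D| * `|w| <= `|D| / 2 * nh.
  rewrite -normrM (_ : D * w = a * (u * c + w * d) - c * (u * a + w * b)).
    apply: key => //. rewrite /M; apply: aux2.
  by rewrite /D; ring.
by move=> H; rewrite -(ler_pM2l Dp); apply: le_trans H _; rewrite mulrAC -mulrA.
Qed.

Lemma half_le0 (R : realType) (t : R) : t <= t / 2 -> t <= 0.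
Proof. lra. Qed.

Lemma lin2 (R : realType) (L : {linear 'rV[R]_2 -> R}) h :
  L h = h 0 0 * L (e2 R 0) + h 0 1 * L (e2 R 1).
Proof. by rewrite {1}(@rV2_dec _ h) linearD !linearZ. Qed.

Lemma iso_core (R : realType) (L1 L2 : {linear 'rV[R]_2 -> R}) (h : 'rV[R]_2) :
  L1 (e2 R 0) * L2 (e2 R 1) - L1 (e2 R 1) * L2 (e2 R 0) != 0 ->
  `|L1 h| <= `|L1 (e2 R 0) * L2 (e2 R 1) - L1 (e2 R 1) * L2 (e2 R 0)| /
      (2 * (`|L1 (e2 R 0)| + `|L1 (e2 R 1)| + `|L2 (e2 R 0)| + `|L2 (e2 R 1)| + 1)) * `|h| ->
  `|L2 h| <= `|L1 (e2 R 0) * L2 (e2 R 1) - L1 (e2 R 1) * L2 (e2 R 0)| /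
      (2 * (`|L1 (e2 R 0)| + `|L1 (e2 R 1)| + `|L2 (e2 R 0)| + `|L2 (e2 R 1)| + 1)) * `|h| ->
  h = 0.
Proof.
move=> D0; have E1 := @lin2 R L1 h; have E2 := @lin2 R L2 h.
rewrite [X in `|X| <= _]E1 => H1; rewrite [X in `|X| <= _]E2 => H2.
have [hu hw] := @core2 R _ _ _ _ _ _ _ D0 (normr_ge0 h) H1 H2.
have := @half_le0 R _ (@norm_rV2_le R _ _ hu hw).
by rewrite normr_le0 => /eqP.
Qed.

Lemma iso2 (R : realType) (f1 f2 : 'rV[R]_2 -> R) x :
 differentiable f1 x -> differentiable f2 x ->
 'd f1 x (e2 R 0) * 'd f2 x (e2 R 1) - 'd f1 x (e2 R 1) * 'd f2 x (e2 R 0) != 0 ->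
 exists2 e : R, 0 < e & forall x', `|x' - x| < e -> f1 x' = f1 x -> f2 x' = f2 x -> x' = x.
Proof.
move=> d1 d2 D0.
have M0 : 0 < `|'d f1 x (e2 R 0)| + `|'d f1 x (e2 R 1)| + `|'d f2 x (e2 R 0)| + `|'d f2 x (e2 R 1)| + 1.
  by rewrite ltr_pwDr // !addr_ge0.
pose eps := `|'d f1 x (e2 R 0) * 'd f2 x (e2 R 1) - 'd f1 x (e2 R 1) * 'd f2 x (e2 R 0)| / (2 * (`|'d f1 x (e2 R 0)| + `|'d f1 x (e2 R 1)| + `|'d f2 x (e2 R 0)| + `|'d f2 x (e2 R 1)| + 1)).
have eps0 : 0 < eps by rewrite divr_gt0 ?normr_gt0 // mulr_gt0.
have := filterI (diff_small d1 _ eps0) (diff_small d2 _ eps0).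
move=> HH; have [e e0 He] := iffLR (@nbhs_norm0P _ _ _) (HH _).
exists e => // x' hx E1 E2.
have [H1 H2] := He (x' - x) hx.
move: H1 H2; rewrite subrK E1 E2 !subrr !sub0r !normrN => H1 H2.
apply/eqP; rewrite -subr_eq0; apply/eqP.
exact: (@iso_core R _ _ _ D0 H1 H2).
Qed.


Lemma coord_diff (R : realType) (V : normedModType R) (n : nat) (P : V -> 'rV[R]_n) x i : differentiable P x ->
  differentiable (fun y => P y 0 i) x.
Proof.
move=> dP.
have -> : (fun y => P y 0 i) = (fun N : 'rV[R]_n => N 0 i) \o P by [].
apply: differentiable_comp => //; exact: differentiable_coord.
Qed.

Lemma coord_derive (R : realType) (V : normedModType R) (n : nat) (P : V -> 'rV[R]_n) x v i : differentiable P x ->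
  'D_v (fun y => P y 0 i) x = 'D_v P x 0 i.
Proof.
move=> dP; rewrite (derive_mx (diff_derivable (v:=v) dP)) mxE //.
Qed.

Lemma dot_diff (R : realType) (V : normedModType R) (n : nat) (P Q : V -> 'rV[R]_n) x : differentiable P x -> differentiable Q x ->
  differentiable (fun y => dotv (P y) (Q y)) x.
Proof.
move=> dP dQ.
have -> : (fun y => dotv (P y) (Q y)) =
   \sum_(i < n) ((fun y => P y 0 i) * (fun y => Q y 0 i)).
  by apply/funext => y; rewrite /dotv fct_sumE.
apply: differentiable_sum => i.
by apply: differentiableM; apply: coord_diff.
Qed.

Lemma dot_derive (R : realType) (V : normedModType R) (n : nat) (P Q : V -> 'rV[R]_n) x v : differentiable P x -> differentiable Q x ->
  'D_v (fun y => dotv (P y) (Q y)) x = dotv ('D_v P x) (Q x) + dotv (P x) ('D_v Q x).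
Proof.
move=> dP dQ.
have -> : (fun y => dotv (P y) (Q y)) =
   \sum_(i < n) ((fun y => P y 0 i) * (fun y => Q y 0 i)).
  by apply/funext => y; rewrite /dotv fct_sumE.
rewrite derive_sum; last first.
  move=> i; apply: diff_derivable.
  by apply: differentiableM; apply: coord_diff.
rewrite /dotv -big_split /=; apply: eq_bigr => i _.
rewrite deriveM; last 2 first.
- exact/diff_derivable/coord_diff.
- exact/diff_derivable/coord_diff.
rewrite !coord_derive // /GRing.scale /=.
by rewrite addrC mulrC; congr (_ + _); rewrite mulrC.
Qed.

Lemma dotvZl (R : realType) n (a : R) (u w : 'rV[R]_n) : dotv (a *: u) w = a * dotv u w.
Proof. by rewrite /dotv mulr_sumr; apply: eq_bigr => i _; rewrite mxE mulrA. Qed.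

Lemma dotv_ge0 (R : realType) n (u : 'rV[R]_n) : 0 <= dotv u u.
Proof. by rewrite /dotv sumr_ge0 // => i _; rewrite -expr2 sqr_ge0. Qed.

Lemma dotv_enorm (R : realType) n (u : 'rV[R]_n) : dotv u u = enorm u ^+ 2.
Proof. by rewrite /enorm sqr_sqrtr // dotv_ge0. Qed.

Lemma dotvC (R : realType) n (u w : 'rV[R]_n) : dotv u w = dotv w u.
Proof. by rewrite /dotv; apply: eq_bigr => i _; rewrite mulrC. Qed.

Lemma sum2_aux (R : realType) (n z : R) : n != 0 -> z + z = 2 * (n * (n^-1 * z)).
Proof. by move=> n0; rewrite mulVKf // mulr_natl mulr2n. Qed.

Lemma det_aux (R : realType) (n p0 p1 g0 g1 : R) : n != 0 ->
  2 * (n * p0) * g1 - 2 * (n * p1) * g0 = 0 -> p0 * g1 - p1 * g0 = 0.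
Proof.
move=> n0 H.
have : (2 * n) * (p0 * g1 - p1 * g0) = 0 by rewrite -H; ring.
by move/eqP; rewrite mulf_eq0 mulf_eq0 (negbTE n0) pnatr_eq0 /= => /eqP.
Qed.

Theorem proposition3 (R : realType)
    (psi : 'rV[R]_2 -> 'rV[R]_3) (gam : R -> 'rV[R]_3)
    (U : set 'rV[R]_2) (c0 s1 s2 t1 t2 : R)
    (* gamma: smooth, unit-speed, embedded curve (parameters s in (s1,s2)) *)
    (hgam_smooth : smooth_on [set s | s1 < s < s2] gam)
    (hgam_unit : forall s, s1 < s < s2 -> enorm (derive1 gam s) = 1)
    (hgam_inj : forall s s', s1 < s < s2 -> s1 < s' < s2 -> gam s = gam s' -> s = s')
    (hgam_emb : forall s0, s1 < s0 < s2 -> forall e, 0 < e -> exists2 d, 0 < d &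
        forall s, s1 < s < s2 -> `|gam s - gam s0| < d -> `|s - s0| < e)
    (* psi: smooth local parametrization (embedded patch) of the surface Psi *)
    (hU : open U)
    (hpsi_smooth : smooth_on U psi)
    (hpsi_imm : forall x, U x -> forall a b : R,
        a *: 'D_(e2 R 0) psi x + b *: 'D_(e2 R 1) psi x = 0 -> a = 0 /\ b = 0)
    (hpsi_inj : forall x y, U x -> U y -> psi x = psi y -> x = y)
    (hpsi_emb : forall x0, U x0 -> forall e, 0 < e -> exists2 d, 0 < d &
        forall x, U x -> `|psi x - psi x0| < d -> `|x - x0| < e)
    (* dist(Psi, gamma) > 0 *)
    (hdist : exists2 d, 0 < d & forall x s, U x -> s1 < s < s2 ->
        d <= enorm (psi x - gam s))
    (hc0 : 0 < c0) :
  forall s t sig tau : R, TY0 s1 s2 t1 t2 s t sig tau ->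
  forall x k : 'rV[R]_2,
    Mirror_p psi gam U c0 s1 s2 t1 t2 s t sig tau x k ->
    ~ Sigma_p psi gam U c0 s1 s2 t1 t2 s t sig tau x k ->
    exists2 e : R, 0 < e &
      forall x' k' : 'rV[R]_2,
        Mirror_p psi gam U c0 s1 s2 t1 t2 s t sig tau x' k' ->
        ~ Sigma_p psi gam U c0 s1 s2 t1 t2 s t sig tau x' k' ->
        `|x' - x| < e -> `|k' - k| < e -> x' = x /\ k' = k.
Proof.
clear hgam_smooth hgam_unit hgam_inj hgam_emb hU hpsi_imm hpsi_inj hpsi_emb.
move=> s t sig tau [hY _] x k [[hX hk] hL] hnS.
have hnpar : ~ parallel2 (piTR psi gam x s) (gradRg psi gam x s).
  by move=> hp; apply: hnS; split=> //; left; split.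
case: hL => _ _ ht hsig hkk.
have hUx : U x by case: hX.
have hs : s1 < s < s2 by case: hY.
have tau0 : tau != 0.
  apply/negP => /eqP t0; apply: hk; rewrite hkk t0 mulr0 !mul0r scale0r //.
have dpsi : differentiable psi x by case: (hpsi_smooth 1%N) => + _; apply.
pose P := fun y => Rv psi gam y s.
have dP : differentiable P x.
  have -> : P = psi - cst (gam s) by [].
  by apply: differentiableB => //; exact: differentiable_cst.
have n0 : 0 < enorm (P x).
  case: hdist => d d0 /(_ x s hUx hs) hd; exact: lt_le_trans d0 hd.
pose f1 := fun y => dotv (P y) (P y).
pose w := derive1 gam s.
pose f2 := fun y => dotv (Rhat psi gam y s) w.
have df1 : differentiable f1 x by apply: dot_diff.
have df2 : differentiable f2 x.
  have -> : f2 = (fun y => (Num.sqrt (f1 y))^-1) * (fun y => dotv (P y) w).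
    by apply/funext => y; rewrite /f2 /Rhat dotvZl.
  apply: differentiableM; last first.
    by apply: (@dot_diff R _ 3 P (fun=> w)) => //; exact: differentiable_cst.
  apply: differentiableV; last exact: (lt0r_neq0 n0).
  have -> : (fun y => Num.sqrt (f1 y)) = Num.sqrt \o f1 by [].
  apply: differentiable_comp => //.
  apply/derivable1_diffP.
  have f1p : 0 < f1 x by rewrite /f1 dotv_enorm exprn_gt0.
  have Hd := is_derive1_sqrt f1p; by case: Hd.
have dPD : forall v, 'D_v P x = 'D_v psi x.
  move=> v; have -> : P = psi - cst (gam s) by [].
  rewrite (deriveB (diff_derivable (v:=v) dpsi) (derivable_cst (gam s) x v)).
  by rewrite derive_cst subr0.
have dd1 : forall j, 'd f1 x (e2 R j) = 2 * (enorm (P x) * piTR psi gam x s 0 j).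
  move=> j; rewrite -deriveE //.
  rewrite dot_derive //.
  rewrite dPD mxE /Rhat dotvZl dotvC.
  rewrite /P; apply: sum2_aux; exact: (lt0r_neq0 n0).
have dd2 : forall j, 'd f2 x (e2 R j) = gradRg psi gam x s 0 j.
  by move=> j; rewrite -deriveE // /gradRg mxE.
have D0 : 'd f1 x (e2 R 0) * 'd f2 x (e2 R 1) - 'd f1 x (e2 R 1) * 'd f2 x (e2 R 0) != 0.
  rewrite !dd1 !dd2; apply/eqP => H; apply: hnpar; rewrite /parallel2.
  move: H; apply: det_aux; exact: (lt0r_neq0 n0).
have [e e0 He] := @iso2 R f1 f2 x df1 df2 D0.
have c2 : 2 / c0 != 0 by rewrite mulf_neq0 ?invr_eq0 ?gt_eqF.
have c3 : 2 * tau / c0 != 0.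
  rewrite mulf_neq0 //; last by rewrite invr_eq0 gt_eqF.
  by rewrite mulf_neq0 // pnatr_eq0.
exists e => // x' k' [[hX' hk'] hL'] _ hx _.
case: hL' => _ _ ht' hsig' hkk'.
have Ex : x' = x.
  apply: He => //.
    rewrite /f1 !dotv_enorm; congr (_ ^+ 2).
    by apply: (mulfI c2); rewrite /P -ht -ht'.
  by apply: (mulfI c3); rewrite /f2 /w -hsig -hsig'.
by split => //; rewrite hkk hkk' Ex.
Qed.
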